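(* Let $s\in\mathbb{Z}$ and let $f$ be a $k$-face of $\square_{\alpha_s}$ with vertices $p_1,\ldots,p_{2^k}\in G_{\alpha_s}$. Then: (1) the set $\{g_{\alpha_s}(p_1),\ldots,g_{\alpha_s}(p_{2^k})\}$ is the vertex set of a face $e$ of $\square_{\alpha_{s+1}}$; (2) for every face $e_1\subseteq e$ there is a face $f_1\subseteq f$ with $g_{\alpha_s}(f_1)=e_1$; (3) if $e_1,e_2$ are two opposite facets of $e$, then there exists a pair of opposite facets $f_1,f_2$ of $f$ with $g_{\alpha_s}(f_1)=e_1$ and $g_{\alpha_s}(f_2)=e_2$.
   Context: Fix $d\ge 1$, $\lambda>0$ and scales $\alpha_s:=\lambda 2^s$, $s\in\mathbb{Z}$. The grids $(G_{\alpha_s})_{s\in\mathbb{Z}}$ satisfy $G_{\alpha_0}=\lambda\mathbb{Z}^d$ and, for every $s$, $G_{\alpha_{s+1}}=2(G_{\alpha_s}-O_s)+O_s+\frac{\alpha_s}{2}\varepsilon_s$ for some $O_s\in G_{\alpha_s}$ and sign vector $\varepsilon_s\in\{-1,+1\}^d$; so $G_{\alpha_s}$ is a translate of $\alpha_s\mathbb{Z}^d$. $\mathrm{Vor}_G(x)$ is the Voronoi cell of $x\in G$ w.r.t. $G$ (the closed axis-parallel cube of side $\alpha_s$ centered at $x$ for $G=G_{\alpha_s}$); each $x\in G_{\alpha_s}$ lies in $\mathrm{Vor}_{G_{\alpha_{s+1}}}(y)$ for a unique $y\in G_{\alpha_{s+1}}$. The cubical complex $\square_{\alpha_s}$ consists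 of the faces $\prod_{j=1}^d[x_j,x_j+m_j]$ with $(x_1,\dots,x_d)\in G_{\alpha_s}$ and each $m_j\in\{0,\alpha_s\}$; its dimension is the number of $j$ with $m_j\neq 0$, and its vertices are its points lying in $G_{\alpha_s}$ ($0$-faces are the grid points). A facet of a $k$-face $E$ is a $(k-1)$-face contained in $E$; two facets of $E$ are opposite if they are disjoint. The map $g_{\alpha_s}$ sends a vertex $x\in G_{\alpha_s}$ to the unique $y\in G_{\alpha_{s+1}}$ with $x\in\mathrm{Vor}_{G_{\alpha_{s+1}}}(y)$, and sends a face $f$ of $\square_{\alpha_s}$ to the convex hull of the images of its vertices. *)

(* Defs.v *)
From HB Require Import structures.
From mathcomp Require Import all_boot all_order all_algebra.
From mathcomp Require Import boolp classical_sets reals.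
Set Implicit Arguments. Unset Strict Implicit. Unset Printing Implicit Defensive.
Import Order.TTheory GRing.Theory Num.Theory.
Local Open Scope ring_scope.
Local Open Scope classical_set_scope.

Section Defs.
Variables (R : realType) (d : nat).
Notation pt := 'rV[R]_d.

Definition alpha (lam : R) (s : int) : R := lam * (2 : R) ^ s.

Definition scaled_Zd (lam : R) : set pt :=
  [set x | forall j : 'I_d, exists z : int, x ord0 j = lam * z%:~R].

Definition grid_family (lam : R) (G : int -> set pt) : Prop :=
  G 0 = scaled_Zd lam /\
  forall s : int, exists (O eps : pt),
    G s O /\ (forall j : 'I_d, eps ord0 j = 1 \/ eps ord0 j = -1) /\
    G (s + 1) = [set 2 *: (y - O) + O + (alpha lam s / 2) *: eps | y in G s].

Definition dist2 (u v : pt) : R := \sum_(j < d) (u ord0 j - v ord0 j) ^+ 2.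

Definition Vor (A : set pt) (x : pt) : set pt :=
  [set y | forall z, A z -> dist2 y x <= dist2 y z].

Definition gmap (G : int -> set pt) (s : int) (x : pt) : pt :=
  xget 0 [set y | G (s + 1) y /\ Vor (G (s + 1)) y x].

Definition box (x m : pt) : set pt :=
  [set y | forall j : 'I_d, x ord0 j <= y ord0 j <= x ord0 j + m ord0 j].

Definition kface (lam : R) (G : int -> set pt) (s : int) (k : nat) (F : set pt) :=
  exists x m : pt, G s x /\
    (forall j : 'I_d, m ord0 j = 0 \/ m ord0 j = alpha lam s) /\
    #|[set j : 'I_d | m ord0 j != 0]| = k /\ F = box x m.

Definition is_face lam G s (F : set pt) := exists k, kface lam G s k F.

Definition vertices (G : int -> set pt) (s : int) (F : set pt) : set pt :=
  [set p | G s p /\ F p].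

Definition facet lam G s (F E : set pt) :=
  exists k, kface lam G s k.+1 E /\ kface lam G s k F /\ F `<=` E.

Definition hull (A : set pt) : set pt :=
  [set y | exists n (v : 'I_n -> pt) (t : 'I_n -> R),
     (forall i, A (v i)) /\ (forall i, 0 <= t i) /\ \sum_(i < n) t i = 1 /\
     y = \sum_(i < n) t i *: v i].

Definition gface G s (F : set pt) : set pt := hull (gmap G s @` vertices G s F).

End Defs.

(* Main.v *)
Require Import Defs.
From HB Require Import structures.
From mathcomp Require Import all_boot all_order all_algebra.
From mathcomp Require Import boolp classical_sets reals.
From mathcomp Require Import lra zify.
Set Implicit Arguments. Unset Strict Implicit. Unset Printing Implicit Defensive.
Import Order.TTheory GRing.Theory Num.Theory.
Local Open Scope ring_scope.
Local Open Scope classical_set_scope.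

Section OneD.
Variable R : realType.

Definition inL (c a u : R) := exists z : int, u = c + a * z%:~R.
Definition near (a u q : R) := u - q = a / 2 \/ u - q = - (a / 2).

Lemma intr_lt1 (z : int) : (z%:~R : R) < 1 -> (z <= 0)%R.
Proof. move=> h. have : (z%:~R : R) < 1%:~R by []. rewrite ltr_int. lia. Qed.

Lemma intr_gtm1 (z : int) : -1 < (z%:~R : R) -> (0 <= z)%R.
Proof. move=> h. have : ((-1)%:~R : R) < z%:~R by rewrite intrN. rewrite ltr_int. lia. Qed.

Lemma intr_le (z : int) : (z <= 0)%R -> (z%:~R : R) <= 0.
Proof. by move=> h; rewrite -(ler_int R) in h. Qed.

Lemma intr_eq0 (z : int) : (z%:~R : R) < 1 -> -1 < (z%:~R : R) -> z = 0.
Proof. move=> h1 h2; have := intr_lt1 h1; have := intr_gtm1 h2; lia. Qed.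

Lemma inL_diff c a u v : inL c a u -> inL c a v -> exists z : int, v = u + a * z%:~R.
Proof.
case=> z1 ->; case=> z2 ->; exists (z2 - z1); rewrite intrB; lra.
Qed.

Lemma inL_add c a u (z : int) : inL c a u -> inL c a (u + a * z%:~R).
Proof. case=> z1 ->; exists (z1 + z); rewrite intrD; lra. Qed.

Lemma inL_between c a b u v : 0 < a -> (b = 0 \/ b = a) -> inL c a u -> inL c a v ->
  u <= v <= u + b -> v = u \/ v = u + b.
Proof.
move=> ha hb hu hv.
have [z ->] := inL_diff hu hv.
move=> /andP[h1 h2].
have hz0 : 0 <= (z%:~R : R).
  rewrite -(pmulr_rge0 _ ha); lra.
have hz1 : (z%:~R : R) <= 1.
  rewrite -(ler_pM2l ha) mulr1; lra.
case: hb => hb; subst b.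
- left; lra.
- have : z = 0 \/ z = 1.
    have := intr_lt1 (z := z - 1); have := intr_gtm1 (z := z); rewrite intrB.
    move=> H1 H2. 
    have [hz|hz] : (z%:~R : R) < 1 \/ (z%:~R : R) = 1 by lra.
    + left; apply: intr_eq0 => //; lra.
    + right. apply/eqP; rewrite -(eqr_int R) hz //.
  case=> ->; [left|right]; rewrite ?mulr0 ?mulr1; lra.
Qed.

Lemma near_uniq c a u q q' : 0 < a -> inL c (2 * a) q -> inL c (2 * a) q' ->
  near a u q -> near a u q' -> q' = q.
Proof.
move=> ha hq hq' h1 h2.
have [z ez] := inL_diff hq hq'.
have hzl : (z%:~R : R) < 1.
  rewrite -(ltr_pM2l (_ : 0 < 2 * a)); last lra.
  rewrite mulr1; case: h1; case: h2; lra.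
have hzg : -1 < (z%:~R : R).
  rewrite -(ltr_pM2l (_ : 0 < 2 * a)); last lra.
  case: h1; case: h2; lra.
by rewrite ez (intr_eq0 hzl hzg) mulr0 addr0.
Qed.

Lemma near_step c a u q q' : 0 < a -> inL c (2 * a) q -> inL c (2 * a) q' ->
  near a u q -> near a (u + a) q' -> q' = q \/ q' = q + 2 * a.
Proof.
move=> ha hq hq' h1 h2.
have [z ez] := inL_diff hq hq'.
have : q' - q = 0 \/ q' - q = a \/ q' - q = 2 * a by case: h1; case: h2; lra.
case=> [h|[h|h]]; [left; lra| |right; lra].
exfalso.
have hzl : (z%:~R : R) < 1.
  rewrite -(ltr_pM2l (_ : 0 < 2 * a)); last lra. lra.
have hzg : -1 < (z%:~R : R).
  rewrite -(ltr_pM2l (_ : 0 < 2 * a)); last lra. lra.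
move: ez; rewrite (intr_eq0 hzl hzg) mulr0 addr0; lra.
Qed.

Lemma near_strict c a u q q' : 0 < a -> inL c (2 * a) q -> inL c (2 * a) q' ->
  near a u q -> q' != q -> (u - q) ^+ 2 < (u - q') ^+ 2.
Proof.
move=> ha hq hq' h1 hne.
have [z ez] := inL_diff hq hq'.
have hz : z != 0 by apply: contraNneq hne => hz; rewrite ez hz mulr0 addr0.
have [hp|hn] : (1 <= (z%:~R : R)) \/ ((z%:~R : R) <= -1).
  have : (0 < z)%R \/ (z < 0)%R by lia.
  case=> h; [left|right].
  - have : (1 <= z)%R by lia. by rewrite -(ler_int R).
  - have : (z <= -1)%R by lia. by rewrite -(ler_int R) intrN.
- have hw : u - q' <= - (3 * a / 2).
    rewrite ez. have : a <= a * z%:~R by rewrite -{1}(mulr1 a) ler_pM2l.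
    case: h1; lra.
  have e1 : (u - q) ^+ 2 = (a / 2) ^+ 2 by case: h1 => ->; rewrite ?sqrrN.
  rewrite e1. have h2 : 0 <= - (u - q') - 3 * a / 2 by lra. nra.
- have hw : 3 * a / 2 <= u - q'.
    rewrite ez. have : a * z%:~R <= - a.
      by rewrite -mulrN1 ler_pM2l.
    case: h1; lra.
  have e1 : (u - q) ^+ 2 = (a / 2) ^+ 2 by case: h1 => ->; rewrite ?sqrrN.
  rewrite e1. have h2 : 0 <= (u - q') - 3 * a / 2 by lra. nra.
Qed.

Lemma near_exists o a u (e : R) : 0 < a -> (e = 1 \/ e = -1) -> inL o a u ->
  exists q, inL (o + a / 2 * e) (2 * a) q /\ near a u q.
Proof.
move=> ha he [n ->].
have [ei [eie hei]] : exists ei : int, ei%:~R = e /\ (ei = 1 \/ ei = -1).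
  by case: he => ->; [exists 1 | exists (-1)]; split; rewrite ?intrN //; [left|right].
set X : int := 2 * n - ei + 1.
have hX := divz_eq X 4.
have hr0 : (0 <= X %% 4)%Z by rewrite modz_ge0.
have hr1 : (X %% 4 < 4)%Z by rewrite ltz_mod.
set h := (X %/ 4)%Z.
exists (o + a / 2 * e + 2 * a * h%:~R); split.
  by exists h.
have : 2 * n - ei - 4 * h = 1 \/ 2 * n - ei - 4 * h = -1.
  rewrite /h; move: hX hr0 hr1; rewrite /X; lia.
rewrite /near -eie.
have e2 : (2%:~R : R) = 2 by [].
have e4 : (4%:~R : R) = 4 by [].
case=> H; have H' := congr1 (fun z : int => (z%:~R : R)) H; move: H' => /=;
  rewrite !intrB !intrM e2 e4 ?intrN => H'.
- left. have : a * (2 * n%:~R - ei%:~R - 4 * h%:~R) = a by rewrite H' mulr1.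
  lra.
- right. have : a * (2 * n%:~R - ei%:~R - 4 * h%:~R) = - a by rewrite H' mulrN1.
  lra.
Qed.



End OneD.

Section Grid.
Variables (R : realType) (d : nat).
Notation pt := 'rV[R]_d.

Definition L (c : pt) (a : R) : set pt :=
  [set y | forall j : 'I_d, inL (c ord0 j) a (y ord0 j)].

Lemma L_recenter c a O : L c a O -> L c a = L O a.
Proof.
move=> hO; apply/seteqP; split=> y hy j.
- have [z ->] := inL_diff (hO j) (hy j). by exists z.
- have [w hw] := hO j; have [z hz] := hy j. exists (w + z); rewrite hz hw intrD; lra.
Qed.

Lemma fwd (c O eps : pt) (a : R) : L c a O ->
  [set 2 *: (y - O) + O + (a / 2) *: eps | y in L c a] = L (O + (a / 2) *: eps) (2 * a).
Proof.
move=> hO; rewrite (L_recenter hO); apply/seteqP; split.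
- move=> _ [y hy <-] j. rewrite !mxE. have [z ->] := hy j. exists z. lra.
- move=> t ht. exists (2^-1 *: (t + O - (a / 2) *: eps)).
    move=> j; rewrite !mxE; have [z hz] := ht j; exists z; rewrite hz !mxE; lra.
  apply/rowP => j; rewrite !mxE; lra.
Qed.

Lemma bwd (c' O eps : pt) (a : R) (Gs G1 : set pt) : 0 < a -> G1 = L c' (2 * a) ->
  G1 = [set 2 *: (y - O) + O + (a / 2) *: eps | y in Gs] ->
  Gs = L (2^-1 *: (c' + O - (a / 2) *: eps)) a.
Proof.
move=> ha h1 h2; apply/seteqP; split.
- move=> y hy j.
  have : G1 (2 *: (y - O) + O + (a / 2) *: eps) by rewrite h2; exists y.
  rewrite h1 => /(_ j) [z]; rewrite !mxE => hz. exists z. lra.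
- move=> y hy.
  have : G1 (2 *: (y - O) + O + (a / 2) *: eps).
    rewrite h1 => j; have [z hz] := hy j; exists z; move: hz; rewrite !mxE => ->. lra.
  rewrite {1}h2 => -[y' hy' e]. 
  suff -> : y = y' by [].
  apply/rowP => j; have := congr1 (fun v : pt => v ord0 j) e => /=; rewrite !mxE. lra.
Qed.

Lemma alpha_gt0 (lam : R) (s : int) : 0 < lam -> 0 < alpha lam s.
Proof. move=> h; rewrite /alpha mulr_gt0 // exprz_gt0 //. Qed.

Lemma alpha_succ (lam : R) (s : int) : alpha lam (s + 1) = 2 * alpha lam s.
Proof.
rewrite /alpha exprzDr ?expr1z; last by rewrite unitfE pnatr_eq0.
lra.
Qed.

Lemma grid_lat (lam : R) (G : int -> set pt) : 0 < lam -> grid_family lam G ->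
  forall s, exists c, G s = L c (alpha lam s).
Proof.
move=> hl [h0 hS].
have step : forall s, (exists c, G s = L c (alpha lam s)) -> exists c, G (s + 1) = L c (alpha lam (s + 1)).
  move=> s [c hc]; have [O [eps [hO [_ he]]]] := hS s.
  exists (O + (alpha lam s / 2) *: eps). rewrite he hc alpha_succ fwd //. by rewrite -hc.
have back : forall s, (exists c, G (s + 1) = L c (alpha lam (s + 1))) -> exists c, G s = L c (alpha lam s).
  move=> s [c hc]; have [O [eps [hO [_ he]]]] := hS s.
  rewrite alpha_succ in hc.
  exists (2^-1 *: (c + O - (alpha lam s / 2) *: eps)).
  exact: (bwd (alpha_gt0 s hl) hc he).
have P0 : exists c, G 0 = L c (alpha lam 0).
  exists 0; rewrite h0 /alpha expr0z mulr1; apply/seteqP; split=> y hy j.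
  - have [z hz] := hy j. exists z; rewrite mxE add0r hz //.
  - have [z hz] := hy j. exists z; move: hz; rewrite mxE add0r //.
have pos : forall n : nat, exists c, G n%:Z = L c (alpha lam n%:Z).
  elim=> [|n IH] //. have e : (n.+1)%:Z = n%:Z + 1 by rewrite -addn1 PoszD.
  rewrite e; exact: step _ IH.
have neg : forall n : nat, exists c, G (- n%:Z) = L c (alpha lam (- n%:Z)).
  elim=> [|n IH]; first by rewrite oppr0.
  apply: back. have -> : - (n.+1)%:Z + 1 = - n%:Z by lia. exact: IH.
move=> s; case: s => n; first exact: pos.
by rewrite NegzE; apply: neg.
Qed.

End Grid.

Section Hull.
Variables (R : realType) (d : nat).
Notation pt := 'rV[R]_d.

Definition corner (y m : pt) (S : {ffun 'I_d -> bool}) : pt :=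
  \row_j (y ord0 j + (if S j then m ord0 j else 0)).

Lemma sumT_enum (F : {ffun 'I_d -> bool} -> R) :
  \sum_(i < #|[set: {ffun 'I_d -> bool}]|) F (enum_val i) = \sum_S F S.
Proof. by rewrite -big_enum_val; apply: eq_bigl => S; rewrite in_setT. Qed.

Lemma prod_distr (F : 'I_d -> bool -> R) :
  \sum_(S : {ffun 'I_d -> bool}) \prod_i F i (S i) = \prod_i (F i true + F i false).
Proof.
rewrite -(bigA_distr_bigA F); apply: eq_bigr => i _; by rewrite big_bool.
Qed.

Lemma hull_box (A : set pt) (y m : pt) : (forall j, 0 <= m ord0 j) ->
  (forall S, A (corner y m S)) -> (forall p, A p -> box y m p) -> hull A = box y m.
Proof.
move=> hm hc hA; apply/seteqP; split.
- move=> _ [n [v [t [hv [ht [hs ->]]]]]] j.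
  rewrite summxE.
  under eq_bigr do rewrite mxE.
  have e1 : y ord0 j = \sum_(i < n) t i * y ord0 j by rewrite -big_distrl /= hs mul1r.
  have e2 : y ord0 j + m ord0 j = \sum_(i < n) t i * (y ord0 j + m ord0 j)
    by rewrite -big_distrl /= hs mul1r.
  apply/andP; split.
  + rewrite {1}e1; apply: ler_sum => i _; apply: ler_wpM2l => //.
    by have /(_ j) /andP[] := hA _ (hv i).
  + rewrite e2; apply: ler_sum => i _; apply: ler_wpM2l => //.
    by have /(_ j) /andP[] := hA _ (hv i).
- move=> z hz.
  pose t j := if m ord0 j == 0 then 0 else (z ord0 j - y ord0 j) / m ord0 j.
  have ht j : 0 <= t j <= 1.
    rewrite /t; case: eqP => [_|hne]; first by rewrite lexx ler01.
    have hpos : 0 < m ord0 j by rewrite lt_neqAle eq_sym; apply/andP; split; [apply/eqP|].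
    have /andP[h1 h2] := hz j.
    apply/andP; split.
    + apply: divr_ge0; lra.
    + rewrite ler_pdivrMr // mul1r; lra.
  have htm j : t j * m ord0 j = z ord0 j - y ord0 j.
    rewrite /t; case: eqP => [h0|hne]; last by rewrite divfK //; apply/eqP.
    have /andP[h1 h2] := hz j. rewrite h0 in h2 *. lra.
  pose w (S : {ffun 'I_d -> bool}) := \prod_j (if S j then t j else 1 - t j).
  exists #|[set: {ffun 'I_d -> bool}]|, (fun i => corner y m (enum_val i)),
    (fun i => w (enum_val i)).
  split; first by move=> i; apply: hc.
  split.
    move=> i; apply: prodr_ge0 => j _; case: ifP => _; have := ht j; lra.
  split.
    rewrite (sumT_enum w) /w.
    rewrite (prod_distr (fun j b => if b then t j else 1 - t j)).
    by rewrite big1 // => i _; lra.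
  apply/rowP => j; rewrite summxE.
  under eq_bigr do rewrite !mxE.
  rewrite (sumT_enum (fun S => w S * (y ord0 j + (if S j then m ord0 j else 0)))).
  pose H i b := (if b then t i else 1 - t i) *
     (if i == j then y ord0 j + (if b then m ord0 j else 0) else 1).
  transitivity (\sum_(S : {ffun 'I_d -> bool}) \prod_i H i (S i)).
    rewrite prod_distr (bigD1 j) //= big1; last first.
      by move=> i /negbTE hij; rewrite /H hij !mulr1; lra.
    rewrite /H eqxx mulr1. 
    have := htm j; lra.
  apply: eq_bigr => S _.
  rewrite /H big_split /= /w; congr (_ * _).
  rewrite (bigD1 j) //= eqxx big1 ?mulr1 // => i /negbTE ->. by [].
Qed.

End Hull.

Lemma near_eq (R : realType) (a U Q U' Q' : R) : near a U Q -> U' - Q' = U - Q -> near a U' Q'.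
Proof. by rewrite /near => h ->. Qed.

Lemma L_addm (R : realType) d (c x m : 'rV[R]_d) b : L c b x ->
  (forall j, m ord0 j = 0 \/ m ord0 j = b) -> L c b (x + m).
Proof.
move=> hx hm j; rewrite mxE; case: (hm j) => ->; first by rewrite addr0; exact: (hx j).
by have := inL_add 1 (hx j); rewrite mulr1.
Qed.

Lemma box_inj (R : realType) d (x m x' m' : 'rV[R]_d) :
  (forall j, 0 <= m ord0 j) -> (forall j, 0 <= m' ord0 j) ->
  box x m = box x' m' -> x = x' /\ m = m'.
Proof.
move=> hm hm' e.
have bx : box x m x by move=> j; rewrite lexx /= lerDl.
have bX : box x m (x + m) by move=> j; rewrite mxE lexx lerDl andbT.
have bx' : box x' m' x' by move=> j; rewrite lexx /= lerDl.
have bX' : box x' m' (x' + m') by move=> j; rewrite mxE lexx lerDl andbT.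
rewrite e in bx bX; rewrite -e in bx' bX'.
have ex : x = x'.
  apply/rowP => j; have /andP[h1 _] := bx j; have /andP[h2 _] := bx' j. lra.
split => //; subst x'.
apply/rowP => j; have /andP[_ h1] := bX j; have /andP[_ h2] := bX' j.
move: h1 h2; rewrite !mxE. lra.
Qed.


Lemma cardE d (P : 'I_d -> bool) : #|[set j : 'I_d | P j]| = #|[set j | P j]%SET|.
Proof. apply: eq_card => j; rewrite !inE; by apply/idP/idP; rewrite in_setE. Qed.

Lemma supp_facet d (A B : {set 'I_d}) k : A \subset B -> #|A| = k -> #|B| = k.+1 ->
  exists j, [/\ j \in B, j \notin A & forall i, i \in B -> i != j -> i \in A].
Proof.
move=> hAB hA hB.
have : ~~ (B \subset A).
  apply/negP => hBA; have := subset_leq_card hBA; rewrite hA hB ltnn //.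
case/subsetPn => j hjB hjA; exists j; split => //.
have hsub : A \subset B :\ j.
  apply/fintype.subsetP => i hi; rewrite !inE; apply/andP; split.
    by apply/eqP => eij; subst; rewrite hi in hjA.
  exact: (fintype.subsetP hAB _ hi).
have hc : #|A| = #|B :\ j|.
  have := cardsD1 j B; rewrite hjB hB hA add1n; by case.
have /(subset_cardP hc) heq := hsub.
by move=> i hi hij; rewrite heq !inE hij hi.
Qed.

Section Main.
Variables (R : realType) (d : nat) (lam : R) (G : int -> set 'rV[R]_d) (s : int)
  (O eps : 'rV[R]_d) (a : R).
Hypotheses (ha : 0 < a) (ha0 : alpha lam s = a) (hGs : G s = L O a)
  (hG1 : G (s + 1) = L (O + (a / 2) *: eps) (2 * a))
  (heps : forall j, eps ord0 j = 1 \/ eps ord0 j = -1).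
Notation pt := 'rV[R]_d.
Local Notation c1 := (O + (a / 2) *: eps).
Local Notation gm := (gmap G s).

Lemma gm_char (x y : pt) : L O a x -> L c1 (2 * a) y ->
  (forall j, near a (x ord0 j) (y ord0 j)) -> gm x = y.
Proof.
have ha' := ha.
move=> hx hy hn; rewrite /gmap; apply: xget_unique.
  split; first by rewrite hG1.
  move=> z; rewrite hG1 => hz; rewrite /dist2; apply: ler_sum => j _.
  have [->|hne] := eqVneq (z ord0 j) (y ord0 j); first by [].
  apply: ltW; exact: (near_strict ha (hy j) (hz j) (hn j) hne).
move=> y' [hy' hv]; rewrite hG1 in hy'.
have hle : dist2 x y' <= dist2 x y by apply: hv; rewrite hG1.
have hge i : 0 <= (x ord0 i - y' ord0 i) ^+ 2 - (x ord0 i - y ord0 i) ^+ 2.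
  have [->|hne] := eqVneq (y' ord0 i) (y ord0 i); first by rewrite subrr.
  have := near_strict ha (hy i) (hy' i) (hn i) hne; lra.
have hsum : \sum_i ((x ord0 i - y' ord0 i) ^+ 2 - (x ord0 i - y ord0 i) ^+ 2) = 0.
  apply/le_anti/andP; split; last exact: sumr_ge0.
  rewrite sumrB; move: hle; rewrite /dist2; lra.
apply/rowP => j; apply/eqP/negPn/negP => hne.
have := psumr_eq0P (fun i _ => hge i) hsum (i := j) isT.
have := near_strict ha (hy j) (hy' j) (hn j) hne. lra.
Qed.

Lemma gm_spec (x : pt) : L O a x ->
  L c1 (2 * a) (gm x) /\ (forall j, near a (x ord0 j) (gm x ord0 j)).
Proof.
have ha' := ha.
move=> hx.
have : forall j, exists q, inL (c1 ord0 j) (2 * a) q /\ near a (x ord0 j) q.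
  move=> j; rewrite !mxE; exact: near_exists ha (heps j) (hx j).
case/fin_all_exists => f hf.
have hy : L c1 (2 * a) (\row_j f j) by move=> j; rewrite mxE; exact: (hf j).1.
have -> : gm x = \row_j f j by apply: gm_char => // j; rewrite mxE; exact: (hf j).2.
by split => // j; rewrite mxE; exact: (hf j).2.
Qed.

Definition mp (x m : pt) : pt := gm (x + m) - gm x.

Lemma mp_val (x m : pt) : L O a x -> (forall j, m ord0 j = 0 \/ m ord0 j = a) ->
  forall j, (m ord0 j = 0 /\ mp x m ord0 j = 0) \/
            (m ord0 j = a /\ (mp x m ord0 j = 0 \/ mp x m ord0 j = 2 * a)).
Proof.
have ha' := ha.
move=> hx hm j.
have [h1 n1] := gm_spec hx; have [h2 n2] := gm_spec (L_addm hx hm).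
have := n2 j; rewrite /mp !mxE => n2j.
case: (hm j) => e; rewrite e in n2j.
- left; split => //. rewrite addr0 in n2j.
  have := near_uniq ha (h1 j) (h2 j) (n1 j) n2j. lra.
- right; split => //.
  have := near_step ha (h1 j) (h2 j) (n1 j) n2j. lra.
Qed.

Lemma vert_img (x m : pt) : L O a x -> (forall j, m ord0 j = 0 \/ m ord0 j = a) ->
  vertices G (s + 1) (box (gm x) (mp x m)) = gm @` vertices G s (box x m).
Proof.
have ha' := ha.
move=> hx hm.
have [h1 n1] := gm_spec hx; have [h2 n2] := gm_spec (L_addm hx hm).
have hmp := mp_val hx hm.
have n2' j : near a (x ord0 j + m ord0 j) (gm x ord0 j + mp x m ord0 j).
  by have := n2 j; rewrite /mp !mxE; move=> h; apply: (near_eq h); lra.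
apply/seteqP; split.
- move=> v [hv hb]; rewrite hG1 in hv.
  have hp : L O a (\row_j (if v ord0 j == gm x ord0 j then x ord0 j else x ord0 j + m ord0 j)).
    move=> j; rewrite mxE; case: eqP => _; first exact: (hx j).
    by have := L_addm hx hm j; rewrite mxE.
  exists (\row_j (if v ord0 j == gm x ord0 j then x ord0 j else x ord0 j + m ord0 j)).
    split; first by rewrite hGs.
    move=> j; rewrite mxE; case: eqP => _; case: (hm j) => ->; apply/andP; split; lra.
  apply: gm_char => // j; rewrite mxE; case: eqP => [e|ne].
    by rewrite e; exact: (n1 j).
  have : v ord0 j = gm x ord0 j \/ v ord0 j = gm x ord0 j + mp x m ord0 j.
    apply: (inL_between (c := c1 ord0 j) (a := 2 * a)) ; first lra.
    + case: (hmp j) => [[_ ->]|[_ [->|->]]]; [left|left|right]; lra.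
    + exact: (h1 j).
    + exact: (hv j).
    + exact: (hb j).
  case=> // ->; exact: n2' j.
- move=> _ [p [hp hb] <-]; rewrite hGs in hp.
  have [hgp ngp] := gm_spec hp.
  split; first by rewrite hG1.
  move=> j.
  have : p ord0 j = x ord0 j \/ p ord0 j = x ord0 j + m ord0 j.
    apply: (inL_between (c := O ord0 j) (a := a)).
    + exact: ha.
    + exact: (hm j).
    + exact: (hx j).
    + exact: (hp j).
    + exact: (hb j).
  have hmp0 : 0 <= mp x m ord0 j by case: (hmp j) => [[_ ->]|[_ [->|->]]]; lra.
  case=> e.
  - have := ngp j; rewrite e => ngj.
    have := near_uniq ha (h1 j) (hgp j) (n1 j) ngj => ->.
    by rewrite lexx /= lerDl.
  - have := ngp j; rewrite e => ngj.
    have hq : inL (c1 ord0 j) (2 * a) (gm x ord0 j + mp x m ord0 j).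
      by have := h2 j; rewrite /mp !mxE; congr inL; lra.
    have := near_uniq ha hq (hgp j) (n2' j) ngj => ->. 
    by rewrite lexx andbT lerDl.
Qed.


Lemma hull_face (c y a1 : pt) (b : R) (A : set pt) : 0 < b -> A = L c b -> L c b y ->
  (forall j, a1 ord0 j = 0 \/ a1 ord0 j = b) ->
  hull [set p | A p /\ box y a1 p] = box y a1.
Proof.
move=> hb hA hy ha1.
apply: hull_box.
- move=> j; case: (ha1 j) => ->; lra.
- move=> S; split.
  + rewrite hA => j; rewrite mxE; case: (S j).
    * case: (ha1 j) => ->; first by rewrite addr0; exact: (hy j).
      by have := inL_add 1 (hy j); rewrite mulr1.
    * by rewrite addr0; exact: (hy j).
  + move=> j; rewrite mxE; case: (S j); case: (ha1 j) => ->; apply/andP; split; lra.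
- by move=> p [].
Qed.

Definition sx (x m y : pt) : pt :=
  \row_j (if y ord0 j == gm x ord0 j then x ord0 j else x ord0 j + m ord0 j).
Definition sm (x m a1 : pt) : pt :=
  \row_j (if (a1 ord0 j == 0) && (mp x m ord0 j != 0) then 0 else m ord0 j).

Lemma sub_coord (x m y a1 : pt) : L O a x -> (forall j, m ord0 j = 0 \/ m ord0 j = a) ->
  L c1 (2 * a) y -> (forall j, a1 ord0 j = 0 \/ a1 ord0 j = 2 * a) ->
  box y a1 `<=` box (gm x) (mp x m) ->
  forall j, (y ord0 j = gm x ord0 j \/ y ord0 j = gm x ord0 j + mp x m ord0 j) /\
            y ord0 j + a1 ord0 j <= gm x ord0 j + mp x m ord0 j.
Proof.
have ha' := ha.
move=> hx hm hy ha1 hsub j.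
have [h1 n1] := gm_spec hx.
have hmp := mp_val hx hm.
have by1 : box y a1 y by move=> i; case: (ha1 i) => ->; apply/andP; split; lra.
have bY : box y a1 (y + a1) by move=> i; rewrite mxE; case: (ha1 i) => ->; apply/andP; split; lra.
have := hsub _ by1 j; have := hsub _ bY j; rewrite mxE => /andP[_ hY] hyb.
split => //.
apply: (inL_between (c := c1 ord0 j) (a := 2 * a)).
- lra.
- case: (hmp j) => [[_ ->]|[_ [->|->]]]; [left|left|right]; lra.
- exact: (h1 j).
- exact: (hy j).
- exact: hyb.
Qed.

Lemma coord_facts (x m y a1 : pt) : L O a x -> (forall j, m ord0 j = 0 \/ m ord0 j = a) ->
  L c1 (2 * a) y -> (forall j, a1 ord0 j = 0 \/ a1 ord0 j = 2 * a) ->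
  box y a1 `<=` box (gm x) (mp x m) -> forall j,
  [/\ (sx x m y ord0 j = x ord0 j /\ y ord0 j = gm x ord0 j) \/
      (sx x m y ord0 j = x ord0 j + m ord0 j /\ y ord0 j = gm x ord0 j + mp x m ord0 j
        /\ mp x m ord0 j = 2 * a),
      (sm x m a1 ord0 j = 0 /\ a1 ord0 j = 0 /\ mp x m ord0 j = 2 * a) \/
      (sm x m a1 ord0 j = m ord0 j /\ (a1 ord0 j = 2 * a \/ mp x m ord0 j = 0)),
      y ord0 j + a1 ord0 j <= gm x ord0 j + mp x m ord0 j,
      (m ord0 j = 0 /\ mp x m ord0 j = 0) \/
            (m ord0 j = a /\ (mp x m ord0 j = 0 \/ mp x m ord0 j = 2 * a)) &
      (near a (x ord0 j) (gm x ord0 j) /\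
       near a (x ord0 j + m ord0 j) (gm x ord0 j + mp x m ord0 j))].
Proof.
have ha' := ha.
move=> hx hm hy ha1 hsub j.
have [h1 n1] := gm_spec hx; have [h2 n2] := gm_spec (L_addm hx hm).
have hmp := mp_val hx hm j.
have n2' : near a (x ord0 j + m ord0 j) (gm x ord0 j + mp x m ord0 j).
  by have := n2 j; rewrite /mp !mxE; move=> h; apply: (near_eq h); lra.
have [hc1 hc2] := sub_coord hx hm hy ha1 hsub j.
have ha1j := ha1 j.
split => //.
- rewrite /sx mxE; case: eqP => e; [left; split => // | right].
  case: hc1 => // e'. split=> //; split => //.
  case: hmp => [[_ e2]|[_ [e2|e2]]] //; exfalso; apply: e; lra.
- rewrite /sm mxE.
  have [E1|E1] := eqVneq (a1 ord0 j) 0; have [E2|E2] := eqVneq (mp x m ord0 j) 0;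
    rewrite /= ?E1 ?E2 ?eqxx /=.
  + right; split => //; right => //.
  + left; split => //; split => //. case: hmp => [[_ e2]|[_ [e2|e2]]] //; exfalso; move/eqP: E2; lra.
  + right; split => //; right => //.
  + right; split => //; left. case: ha1j => // e2; exfalso; move/eqP: E1; lra.
Qed.

Lemma sub_face (x m y a1 : pt) : L O a x -> (forall j, m ord0 j = 0 \/ m ord0 j = a) ->
  L c1 (2 * a) y -> (forall j, a1 ord0 j = 0 \/ a1 ord0 j = 2 * a) ->
  box y a1 `<=` box (gm x) (mp x m) ->
  [/\ L O a (sx x m y), (forall j, sm x m a1 ord0 j = 0 \/ sm x m a1 ord0 j = a),
      box (sx x m y) (sm x m a1) `<=` box x m, gm (sx x m y) = y &
      gm (sx x m y + sm x m a1) = y + a1].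
Proof.
have ha' := ha.
move=> hx hm hy ha1 hsub.
have hF := coord_facts hx hm hy ha1 hsub.
have hsx : L O a (sx x m y).
  move=> j; rewrite mxE; case: eqP => _; first exact: (hx j).
  by have := L_addm hx hm j; rewrite mxE.
have hsm : forall j, sm x m a1 ord0 j = 0 \/ sm x m a1 ord0 j = a.
  move=> j; rewrite mxE; case: ifP => _; [by left | exact: (hm j)].
split => //.
- move=> p hp j; have := hp j; have [F1 F2 F3 F4 _] := hF j. lra.
- apply: gm_char => // j; have [F1 F2 F3 F4 [F5 F6]] := hF j.
  move: F5 F6; rewrite /near; lra.
- apply: gm_char => //; first exact: L_addm.
    exact: L_addm.
  move=> j; have [F1 F2 F3 F4 [F5 F6]] := hF j.
  have -> : (sx x m y + sm x m a1) ord0 j = sx x m y ord0 j + sm x m a1 ord0 j by rewrite !mxE.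
  have -> : (y + a1) ord0 j = y ord0 j + a1 ord0 j by rewrite !mxE.
  have := ha1 j; move: F5 F6; rewrite /near; lra.
Qed.

Lemma gface_sub (x m y a1 : pt) : L O a x -> (forall j, m ord0 j = 0 \/ m ord0 j = a) ->
  L c1 (2 * a) y -> (forall j, a1 ord0 j = 0 \/ a1 ord0 j = 2 * a) ->
  box y a1 `<=` box (gm x) (mp x m) ->
  gface G s (box (sx x m y) (sm x m a1)) = box y a1.
Proof.
have ha' := ha.
move=> hx hm hy ha1 hsub.
have [h1 h2 h3 h4 h5] := sub_face hx hm hy ha1 hsub.
rewrite /gface -vert_img // /mp h4 h5.
have -> : y + a1 - y = a1 by rewrite addrC addKr.
apply: (hull_face (c := c1) (b := 2 * a)) => //; lra.
Qed.


Lemma facet_data (x m : pt) (e1 : set pt) : L O a x -> (forall j, m ord0 j = 0 \/ m ord0 j = a) ->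
  facet lam G (s + 1) e1 (box (gm x) (mp x m)) ->
  exists y1 a1 j1, [/\ e1 = box y1 a1, L c1 (2 * a) y1,
    (forall i, a1 ord0 i = 0 \/ a1 ord0 i = 2 * a),
    box y1 a1 `<=` box (gm x) (mp x m) &
    [/\ mp x m ord0 j1 = 2 * a, a1 ord0 j1 = 0 &
        forall i, i != j1 -> mp x m ord0 i = 2 * a -> a1 ord0 i = 2 * a]].
Proof.
have ha' := ha.
move=> hx hm [k1 [[z0 [a0 [hz0 [ha0v [hc0 he]]]]] [[y1 [a1 [hy1 [ha1v [hc1 he1]]]]] hsub]]].
rewrite he1 in hsub.
have hmp := mp_val hx hm.
rewrite alpha_succ ha0 in ha0v ha1v.
have hmp0 : forall j, 0 <= mp x m ord0 j by move=> j; case: (hmp j) => [[_ ->]|[_ [->|->]]]; lra.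
have ha00 : forall j, 0 <= a0 ord0 j by move=> j; case: (ha0v j) => ->; lra.
have [_ ema] := box_inj hmp0 ha00 he.
rewrite -ema in hc0.
rewrite hG1 in hy1.
have hsc := sub_coord hx hm hy1 ha1v hsub.
rewrite cardE in hc1; rewrite cardE in hc0.
have [|j1 [hj1B hj1A hall]] := supp_facet (A := [set i | a1 ord0 i != 0]%SET)
    (B := [set i | mp x m ord0 i != 0]%SET) _ hc1 hc0.
  apply/fintype.subsetP => i; rewrite !inE => hi; have [hh h] := hsc i.
  apply/eqP => e0; case: (ha1v i) => e; first by rewrite e eqxx in hi.
  lra.
rewrite !inE in hj1B hj1A.
exists y1, a1, j1; split => //; split.
- by case: (hmp j1) => [[_ e]|[_ [e|e]]] //; rewrite e eqxx in hj1B.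
- by apply/eqP; rewrite negbK in hj1A.
- move=> i hij hi.
  have h2a : 2 * a != 0 by apply: lt0r_neq0; lra.
  have := hall i; rewrite !inE hi h2a => /(_ isT hij).
  case: (ha1v i) => e; last by [].
  by rewrite e eqxx.
Qed.

Lemma main_sec k (x m : pt) : L O a x -> (forall j, m ord0 j = 0 \/ m ord0 j = a) ->
  #|[set j : 'I_d | m ord0 j != 0]| = k ->
  exists e : set pt,
    [/\ is_face lam G (s + 1) e,
        vertices G (s + 1) e = gm @` vertices G s (box x m),
        (forall e1, is_face lam G (s + 1) e1 -> e1 `<=` e ->
           exists f1, [/\ is_face lam G s f1, f1 `<=` box x m & gface G s f1 = e1]) &
        (forall e1 e2, facet lam G (s + 1) e1 e -> facet lam G (s + 1) e2 e ->
           e1 `&` e2 = set0 ->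
           exists f1 f2, [/\ facet lam G s f1 (box x m), facet lam G s f2 (box x m),
                             f1 `&` f2 = set0, gface G s f1 = e1 &
                             gface G s f2 = e2])].
Proof.
have ha' := ha.
move=> hx hm hk.
have hmp := mp_val hx hm.
have [h1 n1] := gm_spec hx.
exists (box (gm x) (mp x m)); split.
- exists #|[set j : 'I_d | mp x m ord0 j != 0]|, (gm x), (mp x m).
  split; first by rewrite hG1.
  split; last by split.
  move=> j; rewrite alpha_succ ha0.
  by case: (hmp j) => [[_ ->]|[_ [->|->]]]; [left|left|right].
- exact: vert_img.
- move=> e1 [k1 [y [a1 [hy [ha1v [_ he1]]]]]] hsub.
  rewrite he1 in hsub *.
  rewrite alpha_succ ha0 in ha1v; rewrite hG1 in hy.
  have [p1 p2 p3 p4 p5] := sub_face hx hm hy ha1v hsub.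
  exists (box (sx x m y) (sm x m a1)); split.
  + exists #|[set j : 'I_d | sm x m a1 ord0 j != 0]|, (sx x m y), (sm x m a1).
    split; first by rewrite hGs.
    split; last by split.
    by move=> j; rewrite ha0; exact: p2.
  + exact: p3.
  + exact: gface_sub.
- move=> e1 e2 hf1 hf2 hdis.
  have [y1 [a1 [j1 [E1 hy1 ha1 hsub1 [J1a J1b J1c]]]]] := facet_data hx hm hf1.
  have [y2 [a2 [j2 [E2 hy2 ha2 hsub2 [J2a J2b J2c]]]]] := facet_data hx hm hf2.
  have hc1 := sub_coord hx hm hy1 ha1 hsub1.
  have hc2 := sub_coord hx hm hy2 ha2 hsub2.
  have H : ~ (j1 != j2 \/ y1 ord0 j1 = y2 ord0 j1).
    move=> hor.
    pose z := \row_i (if i == j1 then y1 ord0 i else y2 ord0 i).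
    have : (e1 `&` e2) z.
      rewrite E1 E2; split => i; rewrite mxE; case: eqP => [->|ne].
      + have := ha1 j1; lra.
      + have [hh1 hh2] := hc1 i; have [hh3 hh4] := hc2 i.
        have := ha1 i; have := ha2 i; have := hmp i.
        have := J1c i (introN eqP ne). lra.
      + have [hh1 hh2] := hc1 j1; have [hh3 hh4] := hc2 j1.
        have := ha1 j1; have := ha2 j1.
        case: hor => [hne|heq]; last by lra.
        have := J2c j1 hne J1a. lra.
      + have := ha2 i; lra.
    by rewrite hdis.
  have ej : j1 = j2.
    case: (eqVneq j1 j2) => // hne; exfalso; apply: H; left; exact: hne.
  have hyne : y1 ord0 j1 <> y2 ord0 j1 by move=> heq; apply: H; right.
  subst j2.
  have hm_j1 : m ord0 j1 = a by case: (hmp j1) => [[_ e]|[e _]] //; lra.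
  have [p1 p2 p3 p4 p5] := sub_face hx hm hy1 ha1 hsub1.
  have [q1 q2 q3 q4 q5] := sub_face hx hm hy2 ha2 hsub2.
  have an0 : a != 0 by rewrite lt0r_neq0.
  have a2n0 : 2 * a != 0 by apply: lt0r_neq0; lra.
  have hkS : k = (#|[set j : 'I_d | m ord0 j != 0]%SET :\ j1|).+1.
    by rewrite -hk cardE (cardsD1 j1) inE hm_j1 an0 add1n.
  have hsupp : forall a' : pt, a' ord0 j1 = 0 ->
      (forall i, i != j1 -> mp x m ord0 i = 2 * a -> a' ord0 i = 2 * a) ->
      [set j : 'I_d | sm x m a' ord0 j != 0]%SET = [set j : 'I_d | m ord0 j != 0]%SET :\ j1.
    move=> a' Ja Jc; apply/setP => i; rewrite !inE mxE.
    have [->|ne] := eqVneq i j1.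
      by rewrite Ja eqxx J1a a2n0 /= eqxx.
    rewrite /=.
    case: (hmp i) => [[_ e]|[_ [e|e]]]; rewrite e ?eqxx ?andbF //.
    by rewrite (Jc i ne e) (negbTE a2n0).
  have hfull : kface lam G s (#|[set j : 'I_d | m ord0 j != 0]%SET :\ j1|).+1 (box x m).
    rewrite -hkS; exists x, m; split; first by rewrite hGs.
    by split; [move=> j; rewrite ha0; exact: (hm j) | split].
  exists (box (sx x m y1) (sm x m a1)), (box (sx x m y2) (sm x m a2)); split.
  + exists #|[set j : 'I_d | m ord0 j != 0]%SET :\ j1|; split => //; split => //.
    exists (sx x m y1), (sm x m a1); split; first by rewrite hGs.
    split; first by move=> j; rewrite ha0; exact: p2.
    by split => //; rewrite cardE hsupp.
  + exists #|[set j : 'I_d | m ord0 j != 0]%SET :\ j1|; split => //; split => //.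
    exists (sx x m y2), (sm x m a2); split; first by rewrite hGs.
    split; first by move=> j; rewrite ha0; exact: q2.
    by split => //; rewrite cardE hsupp.
  + apply/seteqP; split => p // [hp1 hp2].
    have := hp1 j1; have := hp2 j1.
    have [F1 F2 _ _ _] := coord_facts hx hm hy1 ha1 hsub1 j1.
    have [G1 G2 _ _ _] := coord_facts hx hm hy2 ha2 hsub2 j1.
    case: F1 => F1; case: G1 => G1; try (exfalso; apply: hyne; lra); lra.
  + by rewrite E1; apply: gface_sub.
  + by rewrite E2; apply: gface_sub.
Qed.

End Main.

Theorem lemma4 (R : realType) (d : nat) (lam : R) (G : int -> set 'rV[R]_d)
  (s : int) (k : nat) (f : set 'rV[R]_d) :
  (0 < d)%N -> 0 < lam -> grid_family lam G -> kface lam G s k f ->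
  exists e : set 'rV[R]_d,
    [/\ is_face lam G (s + 1) e,
        vertices G (s + 1) e = gmap G s @` vertices G s f,
        (forall e1, is_face lam G (s + 1) e1 -> e1 `<=` e ->
           exists f1, [/\ is_face lam G s f1, f1 `<=` f & gface G s f1 = e1]) &
        (forall e1 e2, facet lam G (s + 1) e1 e -> facet lam G (s + 1) e2 e ->
           e1 `&` e2 = set0 ->
           exists f1 f2, [/\ facet lam G s f1 f, facet lam G s f2 f,
                             f1 `&` f2 = set0, gface G s f1 = e1 &
                             gface G s f2 = e2])].
Proof.
move=> hd hl hgf [x [m [hxG [hmv [hk ->]]]]].
have [c hc] := grid_lat hl hgf s.
have [_ hS] := hgf.
have [O [eps [hO [heps he]]]] := hS s.
have ha : 0 < alpha lam s := alpha_gt0 s hl.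
have hOL : L c (alpha lam s) O by rewrite -hc.
have hGs : G s = L O (alpha lam s) by rewrite hc (L_recenter hOL).
have hOO : L O (alpha lam s) O by rewrite -hGs.
have hG1 : G (s + 1) = L (O + (alpha lam s / 2) *: eps) (2 * alpha lam s).
  by rewrite he hGs (fwd _ hOO).
have hx : L O (alpha lam s) x by rewrite -hGs.
exact: (main_sec ha (erefl _) hGs hG1 heps hx hmv hk).
Qed.
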